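(* Let $I$ be an interval with $1\in I\subset\,]0,\infty[$. Let $\lambda,\mu,\tilde\mu\in C^1(I\times\mathbb{R})$ be $1$-periodic in $r$, and let $\psi\in C^1(\mathbb{R})$, $\overset{\circ}{\phi}\in C^2(\mathbb{R})$ be $1$-periodic; write $\overset{\circ}{\lambda}=\lambda(1,\cdot)$, $\overset{\circ}{\mu}=\mu(1,\cdot)$. Define the operators $D^{\pm}=e^{-\mu}\partial_t\pm e^{-\lambda}\partial_r$ and the coefficients $$\tilde a=\Big(-\dot\lambda-\frac1t\Big)e^{-\mu}-\tilde\mu e^{-\lambda},\quad b=-\frac{e^{-\mu}}{t},\quad \tilde c=\Big(-\dot\lambda-\frac1t\Big)e^{-\mu}+\tilde\mu e^{-\lambda}.$$ Let $X,Y\in C^1(I\times\mathbb{R})$ be $1$-periodic in $r$ and solve $$D^+X=\tilde aX+bY,\qquad D^-Y=bX+\tilde cY$$ on $I\times\mathbb{R}$ with $X(1,r)=e^{-\overset{\circ}{\mu}(r)}\psi(r)-e^{-\overset{\circ}{\lambda}(r)}\overset{\circ}{\phi}'(r)$ and $Y(1,r)=e^{-\overset{\circ}{\mu}(r)}\psi(r)+e^{-\overset{\circ}{\lambda}(r)}\overset{\circ}{\phi}'(r)$. Set $$K_0=2\sup_{r\in\mathbb{R}}\big(|\psi(r)|e^{-\overset{\circ}{\mu}(r)}+|\overset{\circ}{\phi}'(r)|e^{-\overset{\circ}{\lambda}(r)}\big),\quad m(t)=\sup_{r\in\mathbb{R}}\Big(|\dot\lambda(t,r)|+\frac2t+|\tilde\mu(t,r)|e^{(\mu-\lambda)(t,r)}\Big),$$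 $$K(t)=\sup_{r\in\mathbb{R}}\big(X^2+Y^2\big)^{1/2}(t,r).$$ Then for $t\in I$ with $t\le1$, $$K(t)\le K_0+3\int_t^1 m(s)K(s)\,ds,$$ and for $t\in I$ with $t\ge1$, $K(t)\le K_0+3\int_1^t m(s)K(s)\,ds$.
   Context: A dot denotes $\partial_t$ and a prime denotes $\partial_r$. The variable $t$ is time and $r$ the spatial variable; all functions of $(t,r)$ are periodic in $r$ with period 1. *)

(* Defs.v *)
From Stdlib Require Import Reals.
From Coquelicot Require Import Coquelicot.
Open Scope R_scope.

Definition is_interval (I : R -> Prop) : Prop :=
  forall a b c, I a -> I c -> a <= b -> b <= c -> I b.

Definition deriv_within (I : R -> Prop) (g : R -> R) (t l : R) : Prop :=
  filterlim (fun s => (g s - g t) / (s - t))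
    (within (fun s => I s /\ s <> t) (locally t)) (locally l).

Definition cont_on_IxR (I : R -> Prop) (g : R -> R -> R) : Prop :=
  forall t r, I t ->
    filterlim (fun p : R * R => g (fst p) (snd p))
      (within (fun p : R * R => I (fst p)) (locally (t, r)))
      (locally (g t r)).

(* f in C^1(I x R) with partial derivatives ft = \dot f and fr = f' *)
Definition C1_with (I : R -> Prop) (f ft fr : R -> R -> R) : Prop :=
  (forall t r, I t -> deriv_within I (fun s => f s r) t (ft t r)) /\
  (forall t r, I t -> is_derive (fun x => f t x) r (fr t r)) /\
  cont_on_IxR I f /\ cont_on_IxR I ft /\ cont_on_IxR I fr.

Definition C1_on (I : R -> Prop) (f : R -> R -> R) : Prop :=
  exists ft fr, C1_with I f ft fr.

Definition periodic_r (I : R -> Prop) (f : R -> R -> R) : Prop :=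
  forall t r, I t -> f t (r + 1) = f t r.

Definition periodic1 (g : R -> R) : Prop := forall r, g (r + 1) = g r.

(* supremum over r in R of a real function (as an element of Rbar, then
   projected to R; finite in the situation of the theorem) *)
Definition supR (g : R -> R) : R :=
  real (Lub_Rbar (fun x => exists r, x = g r)).

(* Main.v *)
Require Import Defs.
From Stdlib Require Import Reals Lra Lia ZArith ClassicalEpsilon.
From Coquelicot Require Import Coquelicot.
Open Scope R_scope.

Lemma gen (a T : R) (Z : R -> R -> R) (F h : R -> R) :
  a <= T ->
  (forall r, Z a r <= F a) ->
  (forall t0, a <= t0 <= T -> forall e, 0 < e -> exists d, 0 < d /\
     forall tau, a <= tau <= T -> Rabs (tau - t0) < d ->
       (forall r, Rabs (Z tau r - Z t0 r) < e) /\ Rabs (F tau - F t0) < e) ->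
  (forall t, a < t <= T -> exists rs, (forall r, Z t r <= Z t rs) /\
     forall eta, 0 < eta -> exists d, 0 < d /\ forall tau, t - d < tau < t -> a <= tau ->
        Z t rs - Z tau rs <= (h t + eta) * (t - tau)) ->
  (forall t, a < t <= T -> forall eta, 0 < eta -> exists d, 0 < d /\
     forall tau, t - d < tau < t -> a <= tau -> F t - F tau >= (h t - eta) * (t - tau)) ->
  forall r, Z T r <= F T.
Proof.
  intros HaT H0 Hc Hm HF r.
  apply Rnot_lt_le; intro Hlt.
  set (eps := (Z T r - F T) / (T - a + 2)).
  assert (Heps : 0 < eps) by (unfold eps; apply Rdiv_lt_0_compat; lra).
  set (G := fun t => F t + eps * (t - a) + eps).
  set (S := fun s => a <= s <= T /\ forall tau, a <= tau <= s -> forall r, Z tau r < G tau).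
  assert (HS : exists x, S x).
  { exists a; split; [lra|]. intros tau Ht r'. replace tau with a by lra.
    unfold G. specialize (H0 r'). lra. }
  assert (HB : bound S). { exists T; intros x [Hx _]; lra. }
  destruct (completeness S HB HS) as [ts [Hub Hlub]].
  assert (Hats : a <= ts). { destruct HS as [x Hx]. apply Hub. split; [lra|].
    intros tau Ht r'. replace tau with a by lra. unfold G; specialize (H0 r'); lra. }
  assert (HtsT : ts <= T). { apply Hlub. intros x [Hx _]; lra. }
  assert (Hbelow : forall tau, a <= tau < ts -> forall r, Z tau r < G tau).
  { intros tau Ht r'. apply Rnot_le_lt; intro Hc'.
    assert (ts <= tau).
    { apply Hlub. intros x [Hx Hx2]. apply Rnot_lt_le; intro Hxt.
      specialize (Hx2 tau ltac:(lra) r'). lra. }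
    lra. }
  assert (Hgap : exists g, 0 < g /\ forall r, Z ts r <= G ts - g).
  { destruct (Req_dec ts a) as [Heq|Hne].
    - exists eps; split; [lra|]. intro r'. subst ts. unfold G. specialize (H0 r'). lra.
    - destruct (Hm ts ltac:(lra)) as [rs [Hrs Hd]].
      destruct (Rlt_or_le (Z ts rs) (G ts)) as [Hl|Hge].
      + exists (G ts - Z ts rs); split; [lra|]. intro r'. specialize (Hrs r'). lra.
      + exfalso.
        destruct (Hd (eps/4) ltac:(lra)) as [d1 [Hd1 Hd1']].
        destruct (HF ts ltac:(lra) (eps/4) ltac:(lra)) as [d2 [Hd2 Hd2']].
        set (tau := Rmax a (ts - Rmin d1 d2 / 2)).
        assert (Hmin1 : Rmin d1 d2 <= d1) by apply Rmin_l.
        assert (Hmin2 : Rmin d1 d2 <= d2) by apply Rmin_r.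
        assert (Hminp : 0 < Rmin d1 d2) by (apply Rmin_glb_lt; lra).
        assert (Hta : a <= tau) by apply Rmax_l.
        assert (Htb : ts - Rmin d1 d2 / 2 <= tau) by apply Rmax_r.
        assert (Htc : tau < ts).
        { unfold tau; apply Rmax_lub_lt; lra. }
        specialize (Hd1' tau ltac:(lra) Hta).
        specialize (Hd2' tau ltac:(lra) Hta).
        specialize (Hbelow tau ltac:(lra) rs).
        unfold G in *.
        assert (0 < ts - tau) by lra.
        nra. }
  destruct Hgap as [g [Hg Hgz]].
  assert (Hts_lt : forall r, Z ts r < G ts). { intro r'; specialize (Hgz r'); lra. }
  destruct (Req_dec ts T) as [HeqT|HneT].
  - subst ts. specialize (Hts_lt r). unfold G in Hts_lt.
    assert (Hk : eps * (T - a) + eps = Z T r - F T - eps) by (unfold eps; field; lra).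
    lra.
  - destruct (Hc ts ltac:(lra) (g/3) ltac:(lra)) as [d [Hd Hd']].
    set (s := Rmin T (ts + d/2)).
    assert (Hs1 : s <= T) by apply Rmin_l.
    assert (Hs2 : s <= ts + d/2) by apply Rmin_r.
    assert (Hs3 : ts < s) by (apply Rmin_glb_lt; lra).
    assert (S s).
    { split; [lra|]. intros tau Ht r'.
      destruct (Rlt_or_le tau ts) as [Hl|Hge].
      - apply Hbelow; lra.
      - destruct (Req_dec tau ts) as [->|Hne]; [apply Hts_lt|].
        destruct (Hd' tau ltac:(lra)) as [HZ HFt].
        { rewrite Rabs_right; lra. }
        specialize (HZ r'). specialize (Hgz r').
        apply Rabs_def2 in HZ. apply Rabs_def2 in HFt.
        unfold G in *. assert (eps * (ts - a) <= eps * (tau - a)) by nra. lra. }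
    specialize (Hub s H). lra.
Qed.

Lemma cont_ed I g : cont_on_IxR I g -> forall t r, I t -> forall e, 0 < e ->
  exists d, 0 < d /\ forall t' r', I t' -> Rabs (t' - t) < d -> Rabs (r' - r) < d ->
    Rabs (g t' r' - g t r) < e.
Proof.
  intros Hc t r It e He.
  specialize (Hc t r It).
  destruct (proj1 (filterlim_locally _ _) Hc (mkposreal e He)) as [d Hd].
  exists d; split; [apply cond_pos|].
  intros t' r' It' H1 H2.
  apply (Hd (t', r')); [split; assumption|exact It'].
Qed.

Lemma cont_plus I f g : cont_on_IxR I f -> cont_on_IxR I g -> cont_on_IxR I (fun t r => f t r + g t r).
Proof.
  intros Hf Hg t r It.
  eapply filterlim_comp_2; [apply Hf, It|apply Hg, It|].
  apply (filterlim_plus (f t r) (g t r)).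
Qed.

Lemma cont_mult I f g : cont_on_IxR I f -> cont_on_IxR I g -> cont_on_IxR I (fun t r => f t r * g t r).
Proof.
  intros Hf Hg t r It.
  eapply filterlim_comp_2; [apply Hf, It|apply Hg, It|].
  apply (filterlim_mult (f t r) (g t r)).
Qed.

Lemma cont_comp1 I f (c : R -> R) : cont_on_IxR I f -> (forall t r, I t -> continuous c (f t r)) ->
  cont_on_IxR I (fun t r => c (f t r)).
Proof.
  intros Hf Hc t r It.
  eapply filterlim_comp; [apply Hf, It|apply Hc, It].
Qed.

Lemma cont_t I (c : R -> R) : (forall t, I t -> continuous c t) -> cont_on_IxR I (fun t r => c t).
Proof.
  intros Hc t r It.
  eapply filterlim_comp with (f := fun p : R * R => fst p); [|apply Hc, It].
  intros P [d Hd]. exists d. intros [t' r'] [H1 H2] _. apply Hd. exact H1.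
Qed.

Lemma cont_r I g t r : cont_on_IxR I g -> I t -> continuous (g t) r.
Proof.
  intros Hc It.
  specialize (Hc t r It).
  unfold continuous.
  apply (filterlim_comp _ _ _ (fun r' => (t, r')) (fun p : R * R => g (fst p) (snd p)) _ (within (fun p : R * R => I (fst p)) (locally (t, r)))); [|exact Hc].
  intros P [d Hd]. exists d. intros r' Hr'. apply Hd; [|exact It].
  split; [apply ball_center|exact Hr'].
Qed.

Lemma per_nat f : periodic1 f -> forall r n, f (r + INR n) = f r /\ f (r - INR n) = f r.
Proof.
  intros Hp r n; induction n as [|n IH].
  - simpl. split; f_equal; ring.
  - rewrite S_INR. destruct IH as [IH1 IH2]; split.
    + replace (r + (INR n + 1)) with ((r + INR n) + 1) by ring. rewrite Hp; exact IH1.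
    + rewrite <- IH2. replace (r - INR n) with ((r - (INR n + 1)) + 1) by ring.
      rewrite Hp. reflexivity.
Qed.

Lemma per_Z f : periodic1 f -> forall r n, f (r + IZR n) = f r.
Proof.
  intros Hp r n. destruct (Z_le_gt_dec 0 n) as [Hn|Hn].
  - rewrite <- (Z2Nat.id n Hn), <- INR_IZR_INZ. apply per_nat, Hp.
  - replace n with (- Z.of_nat (Z.to_nat (- n)))%Z by lia.
    rewrite opp_IZR, <- INR_IZR_INZ. apply per_nat, Hp.
Qed.

Lemma per_frac f : periodic1 f -> forall r, exists r0, 0 <= r0 <= 1 /\ f r = f r0.
Proof.
  intros Hp r. destruct (base_Int_part r) as [H1 H2].
  exists (r + IZR (- Int_part r)). rewrite opp_IZR. split; [lra|].
  rewrite <- opp_IZR, per_Z; auto.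
Qed.

Lemma per_max f : periodic1 f -> (forall r, continuous f r) -> exists rs, forall r, f r <= f rs.
Proof.
  intros Hp Hc.
  destruct (continuity_ab_maj f 0 1 ltac:(lra)) as [M [HM _]].
  { intros c _. apply continuity_pt_filterlim, Hc. }
  exists M. intro r. destruct (per_frac f Hp r) as [r0 [Hr0 ->]]. apply HM, Hr0.
Qed.

Lemma supR_max f rs : (forall r, f r <= f rs) -> supR f = f rs.
Proof.
  intro H. unfold supR.
  destruct (Lub_Rbar_correct (fun x => exists r, x = f r)) as [Hub Hl].
  assert (E : Lub_Rbar (fun x => exists r, x = f r) = Finite (f rs)).
  { apply Rbar_le_antisym.
    - apply Hl. intros x [r ->]. simpl. apply H.
    - apply Hub. exists rs; reflexivity. }
  rewrite E. reflexivity.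
Qed.

Lemma deriv_max f rs l : (forall r, f r <= f rs) -> is_derive f rs l -> l = 0.
Proof.
  intros Hm Hd.
  apply is_derive_Reals in Hd.
  pose (pr := exist (fun l => derivable_pt_lim f rs l) l Hd : derivable_pt f rs).
  change l with (derive_pt f rs pr).
  apply (deriv_maximum f (rs - 1) (rs + 1) rs pr); [lra|lra|].
  intros x _ _. apply Hm.
Qed.

Lemma per_t I g t : periodic_r I g -> I t -> periodic1 (g t).
Proof. intros Hp It r. apply Hp, It. Qed.

Lemma unif I g : cont_on_IxR I g -> periodic_r I g -> forall t0, I t0 -> forall e, 0 < e ->
  exists d, 0 < d /\ forall t, I t -> Rabs (t - t0) < d -> forall r, Rabs (g t r - g t0 r) < e.
Proof.
  intros Hc Hp t0 It0 e He.
  assert (Hd : forall r0, exists d : posreal, forall t' r', I t' -> Rabs (t' - t0) < d -> Rabs (r' - r0) < d ->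
    Rabs (g t' r' - g t0 r0) < e/2).
  { intro r0. destruct (cont_ed I g Hc t0 r0 It0 (e/2) ltac:(lra)) as [d [Hd Hd']].
    exists (mkposreal d Hd). exact Hd'. }
  set (delta := fun r0 => proj1_sig (constructive_indefinite_description _ (Hd r0))).
  assert (Hdelta : forall r0 t' r', I t' -> Rabs (t' - t0) < delta r0 -> Rabs (r' - r0) < delta r0 ->
    Rabs (g t' r' - g t0 r0) < e/2).
  { intro r0. unfold delta. destruct (constructive_indefinite_description _ (Hd r0)) as [x Hx]. exact Hx. }
  destruct (compactness_value_1d 0 1 delta) as [d Hcd].
  exists d; split; [apply cond_pos|].
  intros t It Htd r.
  destruct (base_Int_part r) as [Hb1 Hb2].
  set (x := r + IZR (- Int_part r)).
  assert (Ex : forall s, I s -> g s r = g s x).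
  { intros s Is. unfold x. rewrite (per_Z (g s) (per_t I g s Hp Is)). reflexivity. }
  rewrite (Ex t It), (Ex t0 It0).
  assert (Hx : 0 <= x <= 1) by (unfold x; rewrite opp_IZR; lra).
  apply Classical_Prop.NNPP. intro Hn. apply (Hcd x Hx). intros [r0 [Hr0 [Hxr Hdr]]].
  apply Hn.
  assert (A1 := Hdelta r0 t x It ltac:(lra) Hxr).
  assert (A2 := Hdelta r0 t0 x It0 ltac:(rewrite Rminus_diag, Rabs_R0; apply cond_pos) Hxr).
  apply Rabs_def2 in A1. apply Rabs_def2 in A2.
  apply Rabs_def1; lra.
Qed.

Lemma sup_at I g t : cont_on_IxR I g -> periodic_r I g -> I t ->
  exists rs, supR (g t) = g t rs /\ forall r, g t r <= g t rs.
Proof.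
  intros Hc Hp It.
  destruct (per_max (g t) (per_t I g t Hp It) (fun r => cont_r I g t r Hc It)) as [rs Hrs].
  exists rs; split; [apply supR_max|]; exact Hrs.
Qed.

Lemma sup_ge I g t r : cont_on_IxR I g -> periodic_r I g -> I t -> g t r <= supR (g t).
Proof.
  intros Hc Hp It. destruct (sup_at I g t Hc Hp It) as [rs [-> H]]. apply H.
Qed.

Definition hcont (I : R -> Prop) (f : R -> R) :=
  forall s, I s -> forall e, 0 < e -> exists d, 0 < d /\ forall u, I u -> Rabs (u - s) < d -> Rabs (f u - f s) < e.

Lemma sup_cont I g : cont_on_IxR I g -> periodic_r I g -> hcont I (fun t => supR (g t)).
Proof.
  intros Hc Hp t0 It0 e He.
  destruct (unif I g Hc Hp t0 It0 e He) as [d [Hd Hd']].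
  exists d; split; [exact Hd|]. intros t It Ht.
  destruct (sup_at I g t Hc Hp It) as [r1 [-> H1]].
  destruct (sup_at I g t0 Hc Hp It0) as [r0 [-> H0]].
  assert (A1 := Hd' t It Ht r1). assert (A0 := Hd' t It Ht r0).
  specialize (H1 r0). specialize (H0 r1).
  apply Rabs_def2 in A1. apply Rabs_def2 in A0. apply Rabs_def1; lra.
Qed.

Lemma hcont_F I f : hcont I f <-> forall s, I s -> filterlim f (within I (locally s)) (locally (f s)).
Proof.
  split.
  - intros H s Is. apply filterlim_locally. intro eps.
    destruct (H s Is eps (cond_pos eps)) as [d [Hd Hd']].
    exists (mkposreal d Hd). intros u Hu Iu. apply Hd'; auto.
  - intros H s Is e He. specialize (H s Is).
    destruct (proj1 (filterlim_locally _ _) H (mkposreal e He)) as [d Hd].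
    exists d; split; [apply cond_pos|]. intros u Iu Hu. apply (Hd u); auto.
Qed.

Lemma hcont_mult I f g : hcont I f -> hcont I g -> hcont I (fun s => f s * g s).
Proof.
  intros Hf Hg. apply hcont_F. rewrite hcont_F in Hf. rewrite hcont_F in Hg.
  intros s Is. eapply filterlim_comp_2; [apply Hf, Is|apply Hg, Is|].
  apply (filterlim_mult (f s) (g s)).
Qed.

Lemma clamp_lip lo hi x z : lo <= hi ->
  Rabs (Rmax lo (Rmin hi x) - Rmax lo (Rmin hi z)) <= Rabs (x - z).
Proof.
  intro H. unfold Rmax, Rmin.
  repeat (destruct Rle_dec); unfold Rabs; repeat (destruct Rcase_abs); lra.
Qed.

Lemma clamp_in lo hi x : lo <= hi -> lo <= Rmax lo (Rmin hi x) <= hi.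
Proof. intro H. unfold Rmax, Rmin. repeat (destruct Rle_dec); lra. Qed.

Lemma exrint I h lo hi : is_interval I -> I lo -> I hi -> lo <= hi -> hcont I h -> ex_RInt h lo hi.
Proof.
  intros Hi Ilo Ihi Hle Hc.
  apply (ex_RInt_ext (fun x => h (Rmax lo (Rmin hi x)))).
  { intros x Hx. rewrite Rmin_left in Hx by lra. rewrite Rmax_right in Hx by lra.
    f_equal. rewrite Rmin_right by lra. rewrite Rmax_right by lra. reflexivity. }
  apply (@ex_RInt_continuous R_CompleteNormedModule). intros z _.
  apply continuity_pt_filterlim.
  unfold continuity_pt, continue_in, limit1_in, limit_in. simpl. unfold R_dist.
  intros e He.
  assert (Hcz := clamp_in lo hi z Hle).
  assert (Iz : I (Rmax lo (Rmin hi z))) by (apply (Hi lo _ hi); tauto).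
  destruct (Hc _ Iz e He) as [d [Hd Hd']].
  exists d; split; [exact Hd|]. intros x [_ Hx].
  apply Hd'.
  - assert (Hcx := clamp_in lo hi x Hle). apply (Hi lo _ hi); tauto.
  - eapply Rle_lt_trans; [apply clamp_lip; exact Hle|exact Hx].
Qed.

Lemma rint_chasles h a b c : ex_RInt h a b -> ex_RInt h b c -> RInt h a c = RInt h a b + RInt h b c.
Proof. intros H1 H2. rewrite <- (RInt_Chasles h a b c H1 H2). reflexivity. Qed.

Lemma rint_lower h a b c : a <= b -> ex_RInt h a b -> (forall x, a <= x <= b -> c <= h x) ->
  (b - a) * c <= RInt h a b.
Proof.
  intros Hab Hex Hc.
  assert (E : RInt (fun _ => c) a b = (b - a) * c) by (rewrite RInt_const; reflexivity).
  rewrite <- E. apply RInt_le; auto. apply ex_RInt_const.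
  intros x Hx. apply Hc; lra.
Qed.

Lemma dw_ed I f t l : deriv_within I f t l -> forall eta, 0 < eta -> exists d, 0 < d /\
  forall u, I u -> u <> t -> Rabs (u - t) < d -> Rabs ((f u - f t) / (u - t) - l) < eta.
Proof.
  intros H eta He.
  destruct (proj1 (filterlim_locally _ _) H (mkposreal eta He)) as [d Hd].
  exists d; split; [apply cond_pos|]. intros u Iu Hu Hd'. apply (Hd u Hd'); auto.
Qed.

Lemma diff1 A x y : A + (x + y) - (A + x) = y. Proof. ring. Qed.
Lemma diff2 A x y : A + x - (A + (x + y)) = - y. Proof. ring. Qed.

Lemma diff3 A x y : A + (x + y) - (A + y) = x. Proof. ring. Qed.
Lemma diff4 A x y : A + y - (A + (x + y)) = - x. Proof. ring. Qed.

Section Key.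
Variables (I : R -> Prop) (W Zt Zr : R -> R -> R) (h : R -> R) (A : R).
Hypotheses (Hint : is_interval I) (I1 : I 1) (Hc : cont_on_IxR I W) (Hp : periodic_r I W)
  (Hdt : forall t r, I t -> deriv_within I (fun s => W s r) t (Zt t r))
  (Hdr : forall t r, I t -> is_derive (W t) r (Zr t r))
  (Hpde : forall t r, I t -> Zr t r = 0 -> Rabs (Zt t r) <= h t)
  (Hh : hcont I h) (H0 : forall r, W 1 r <= A).

Lemma key_fwd T : I T -> 1 <= T -> forall r, W T r <= A + RInt h 1 T.
Proof.
  intros IT H1T.
  assert (Isub : forall s, 1 <= s <= T -> I s) by (intros s Hs; apply (Hint 1 s T); tauto || lra).
  assert (Hex : forall a b, 1 <= a <= b -> b <= T -> ex_RInt h a b).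
  { intros a b Hab HbT. apply (exrint I); auto; try lra; apply Isub; lra. }
  apply (gen 1 T W (fun s => A + RInt h 1 s) h H1T).
  - intro r. rewrite RInt_point. unfold zero; simpl. specialize (H0 r). lra.
  - intros t0 Ht0 e He.
    destruct (unif I W Hc Hp t0 (Isub t0 Ht0) e He) as [d1 [Hd1 Hd1']].
    destruct (Hh t0 (Isub t0 Ht0) 1 ltac:(lra)) as [d2 [Hd2 Hd2']].
    set (M := Rabs (h t0) + 1).
    assert (HM : 0 < M) by (unfold M; pose proof (Rabs_pos (h t0)); lra).
    exists (Rmin d1 (Rmin d2 (e / M))).
    assert (Hm1 := Rmin_l d1 (Rmin d2 (e / M))).
    assert (Hm2 := Rmin_r d1 (Rmin d2 (e / M))).
    assert (Hm3 := Rmin_l d2 (e / M)). assert (Hm4 := Rmin_r d2 (e / M)).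
    assert (HeM : 0 < e / M) by (apply Rdiv_lt_0_compat; lra).
    split. { apply Rmin_glb_lt; [lra|apply Rmin_glb_lt; lra]. }
    intros tau Htau Hd. split.
    + apply Hd1'; [apply Isub; lra|lra].
    + assert (Hbd : forall x, Rmin t0 tau <= x <= Rmax t0 tau -> Rabs (h x) <= M).
      { intros x Hx.
        assert (Hx' : Rabs (x - t0) < d2).
        { unfold Rmin, Rmax in Hx. destruct Rle_dec; apply Rabs_def2 in Hd; apply Rabs_def1; lra. }
        assert (Ix : I x). { apply Isub. unfold Rmin, Rmax in Hx. destruct Rle_dec; lra. }
        specialize (Hd2' x Ix Hx'). unfold M.
        pose proof (Rabs_triang_inv (h x) (h t0)). lra. }
      assert (HeMM : (e / M) * M = e) by (field; lra).
      destruct (Rle_or_lt t0 tau) as [Hle|Hlt].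
      * rewrite (rint_chasles h 1 t0 tau) by (apply Hex; lra).
        rewrite diff1.
        eapply Rle_lt_trans; [apply abs_RInt_le_const; [exact Hle|apply Hex; lra|]|].
        { intros x Hx. apply Hbd. rewrite Rmin_left, Rmax_right; lra. }
        rewrite Rabs_right in Hd by lra.
        apply Rlt_le_trans with ((e / M) * M); [|lra].
        apply Rmult_lt_compat_r; lra.
      * rewrite (rint_chasles h 1 tau t0) by (apply Hex; lra).
        rewrite diff2.
        rewrite Rabs_Ropp.
        eapply Rle_lt_trans; [apply abs_RInt_le_const; [lra|apply Hex; lra|]|].
        { intros x Hx. apply Hbd. rewrite Rmin_right, Rmax_left; lra. }
        rewrite Rabs_left in Hd by lra.
        apply Rlt_le_trans with ((e / M) * M); [|lra].
        apply Rmult_lt_compat_r; lra.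
  - intros t Ht.
    assert (It : I t) by (apply Isub; lra).
    destruct (per_max (W t) (per_t I W t Hp It) (fun r => cont_r I W t r Hc It)) as [rs Hrs].
    exists rs; split; [exact Hrs|].
    assert (Hz : Zr t rs = 0) by (apply (deriv_max (W t) rs); auto).
    assert (Hb := Hpde t rs It Hz).
    intros eta Heta.
    destruct (dw_ed I _ _ _ (Hdt t rs It) eta Heta) as [d [Hd Hd']].
    exists d; split; [exact Hd|]. intros tau Htau H1tau.
    assert (Hq := Hd' tau ltac:(apply Isub; lra) ltac:(lra) ltac:(rewrite Rabs_left; lra)).
    apply Rabs_def2 in Hq. apply Rabs_le_between in Hb.
    assert (Eq : (W tau rs - W t rs) / (tau - t) * (tau - t) = W tau rs - W t rs).
    { field. lra. }
    set (q := (W tau rs - W t rs) / (tau - t)) in *.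
    assert (0 < t - tau) by lra. nra.
  - intros t Ht eta Heta.
    destruct (Hh t ltac:(apply Isub; lra) eta Heta) as [d [Hd Hd']].
    exists d; split; [exact Hd|]. intros tau Htau H1tau.
    rewrite (rint_chasles h 1 tau t) by (apply Hex; lra).
    apply Rle_ge.
    rewrite diff1. rewrite Rmult_comm.
    apply rint_lower; [lra|apply Hex; lra|].
    intros x Hx.
    destruct (Req_dec x t) as [->|Hne]; [lra|].
    assert (Hx2 := Hd' x ltac:(apply Isub; lra) ltac:(rewrite Rabs_left; lra)).
    apply Rabs_def2 in Hx2. lra.
Qed.

Lemma key_bwd T : I T -> T <= 1 -> forall r, W T r <= A + RInt h T 1.
Proof.
  intros IT HT1.
  assert (Isub : forall s, T <= s <= 1 -> I s) by (intros s Hs; apply (Hint T s 1); tauto || lra).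
  assert (Hex : forall a b, T <= a <= b -> b <= 1 -> ex_RInt h a b).
  { intros a b Hab Hb1. apply (exrint I); auto; try lra; apply Isub; lra. }
  intro r.
  assert (G := gen (-1) (-T) (fun s r => W (- s) r) (fun s => A + RInt h (- s) 1) (fun s => h (- s)) ltac:(lra)).
  simpl in G. rewrite !Ropp_involutive in G. apply G; clear G.
  - intro r'. replace (- (-1)) with 1 by ring. rewrite RInt_point. unfold zero; simpl. specialize (H0 r'). lra.
  - intros t0 Ht0 e He.
    set (s0 := - t0).
    assert (Hs0 : T <= s0 <= 1) by (unfold s0; lra).
    destruct (unif I W Hc Hp s0 (Isub s0 Hs0) e He) as [d1 [Hd1 Hd1']].
    destruct (Hh s0 (Isub s0 Hs0) 1 ltac:(lra)) as [d2 [Hd2 Hd2']].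
    set (M := Rabs (h s0) + 1).
    assert (HM : 0 < M) by (unfold M; pose proof (Rabs_pos (h s0)); lra).
    exists (Rmin d1 (Rmin d2 (e / M))).
    assert (Hm1 := Rmin_l d1 (Rmin d2 (e / M))).
    assert (Hm2 := Rmin_r d1 (Rmin d2 (e / M))).
    assert (Hm3 := Rmin_l d2 (e / M)). assert (Hm4 := Rmin_r d2 (e / M)).
    assert (HeM : 0 < e / M) by (apply Rdiv_lt_0_compat; lra).
    split. { apply Rmin_glb_lt; [lra|apply Rmin_glb_lt; lra]. }
    intros tau Htau Hd.
    set (u := - tau).
    assert (Hu : T <= u <= 1) by (unfold u; lra).
    assert (Hud : Rabs (u - s0) = Rabs (tau - t0)).
    { unfold u, s0. replace (- tau - - t0) with (- (tau - t0)) by ring. apply Rabs_Ropp. }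
    change (- tau) with u. change (- t0) with s0.
    split.
    + apply Hd1'; [apply Isub; lra|rewrite Hud; lra].
    + rewrite <- Hud in Hd.
      assert (Hbd : forall x, Rmin s0 u <= x <= Rmax s0 u -> Rabs (h x) <= M).
      { intros x Hx.
        assert (Hx' : Rabs (x - s0) < d2).
        { unfold Rmin, Rmax in Hx. destruct Rle_dec; apply Rabs_def2 in Hd; apply Rabs_def1; lra. }
        assert (Ix : I x). { apply Isub. unfold Rmin, Rmax in Hx. destruct Rle_dec; lra. }
        specialize (Hd2' x Ix Hx'). unfold M.
        pose proof (Rabs_triang_inv (h x) (h s0)). lra. }
      assert (HeMM : (e / M) * M = e) by (field; lra).
      destruct (Rle_or_lt s0 u) as [Hle|Hlt].
      * rewrite (rint_chasles h s0 u 1) by (apply Hex; lra).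
        rewrite diff4. rewrite Rabs_Ropp.
        eapply Rle_lt_trans; [apply abs_RInt_le_const; [exact Hle|apply Hex; lra|]|].
        { intros x Hx. apply Hbd. rewrite Rmin_left, Rmax_right; lra. }
        rewrite Rabs_right in Hd by lra.
        apply Rlt_le_trans with ((e / M) * M); [|lra].
        apply Rmult_lt_compat_r; lra.
      * rewrite (rint_chasles h u s0 1) by (apply Hex; lra).
        rewrite diff3.
        eapply Rle_lt_trans; [apply abs_RInt_le_const; [lra|apply Hex; lra|]|].
        { intros x Hx. apply Hbd. rewrite Rmin_right, Rmax_left; lra. }
        rewrite Rabs_left in Hd by lra.
        apply Rlt_le_trans with ((e / M) * M); [|lra].
        apply Rmult_lt_compat_r; lra.
  - intros t Ht.
    set (s := - t).
    assert (Is : I s) by (apply Isub; unfold s; lra).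
    destruct (per_max (W s) (per_t I W s Hp Is) (fun r => cont_r I W s r Hc Is)) as [rs Hrs].
    exists rs; split; [exact Hrs|].
    assert (Hz : Zr s rs = 0) by (apply (deriv_max (W s) rs); auto).
    assert (Hb := Hpde s rs Is Hz).
    intros eta Heta.
    destruct (dw_ed I _ _ _ (Hdt s rs Is) eta Heta) as [d [Hd Hd']].
    exists d; split; [exact Hd|]. intros tau Htau H1tau.
    set (u := - tau).
    assert (Hq := Hd' u ltac:(apply Isub; unfold u, s in *; lra) ltac:(unfold u, s in *; lra)
       ltac:(rewrite Rabs_right; unfold u, s in *; lra)).
    apply Rabs_def2 in Hq. apply Rabs_le_between in Hb.
    assert (Eq : (W u rs - W s rs) / (u - s) * (u - s) = W u rs - W s rs).
    { field. unfold u, s in *; lra. }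
    change (- tau) with u.
    set (q := (W u rs - W s rs) / (u - s)) in *.
    assert (Hts : t - tau = u - s) by (unfold u, s; ring).
    rewrite Hts.
    assert (0 < u - s) by (unfold u, s; lra). nra.
  - intros t Ht eta Heta.
    set (s := - t).
    assert (Hs : T <= s < 1) by (unfold s; lra).
    destruct (Hh s ltac:(apply Isub; lra) eta Heta) as [d [Hd Hd']].
    exists d; split; [exact Hd|]. intros tau Htau H1tau.
    set (u := - tau).
    assert (Hu : s < u <= 1) by (unfold u, s in *; lra).
    assert (Hts : t - tau = u - s) by (unfold u, s; ring).
    rewrite Hts. change (- tau) with u.
    rewrite (rint_chasles h s u 1) by (apply Hex; lra).
    apply Rle_ge.
    rewrite diff3. rewrite Rmult_comm.
    apply rint_lower; [lra|apply Hex; lra|].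
    intros x Hx.
    destruct (Req_dec x s) as [->|Hne]; [lra|].
    assert (Hx2 := Hd' x ltac:(apply Isub; lra) ltac:(rewrite Rabs_right; unfold u, s in *; lra)).
    apply Rabs_def2 in Hx2. lra.
Qed.

End Key.

Lemma near_pt I p q s : is_interval I -> I p -> I q -> p <> q -> I s -> forall d, 0 < d ->
  exists u, I u /\ u <> s /\ Rabs (u - s) < d.
Proof.
  intros Hi Ip Iq Hpq Is d Hd.
  assert (Hw : exists w, I w /\ w <> s).
  { destruct (Req_dec p s) as [->|Hne]; [exists q; split; auto|exists p; split; auto]. }
  destruct Hw as [w [Iw Hws]].
  destruct (Rlt_or_le s w) as [Hlt|Hge].
  - exists (Rmin w (s + d/2)).
    assert (H1 := Rmin_l w (s + d/2)). assert (H2 := Rmin_r w (s + d/2)).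
    assert (H3 : s < Rmin w (s + d/2)) by (apply Rmin_glb_lt; lra).
    split; [apply (Hi s _ w); auto; lra|]. split; [lra|]. rewrite Rabs_right; lra.
  - assert (Hlt : w < s) by (destruct Hge; [lra|congruence]).
    exists (Rmax w (s - d/2)).
    assert (H1 := Rmax_l w (s - d/2)). assert (H2 := Rmax_r w (s - d/2)).
    assert (H3 : Rmax w (s - d/2) < s) by (apply Rmax_lub_lt; lra).
    split; [apply (Hi w _ s); auto; lra|]. split; [lra|]. rewrite Rabs_left; lra.
Qed.


Lemma dw_unique I p q s f g l1 l2 : is_interval I -> I p -> I q -> p <> q -> I s ->
  deriv_within I f s l1 -> deriv_within I g s l2 -> (forall u, I u -> f u = g u) -> l1 = l2.
Proof.
  intros Hi Ip Iq Hpq Is H1 H2 Hfg.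
  destruct (Req_dec l1 l2) as [E|Hne]; [exact E|exfalso].
  set (eta := Rabs (l1 - l2) / 2).
  assert (Heta : 0 < eta) by (unfold eta; assert (0 < Rabs (l1 - l2)) by (apply Rabs_pos_lt; lra); lra).
  destruct (dw_ed I f s l1 H1 eta Heta) as [d1 [Hd1 Hd1']].
  destruct (dw_ed I g s l2 H2 eta Heta) as [d2 [Hd2 Hd2']].
  destruct (near_pt I p q s Hi Ip Iq Hpq Is (Rmin d1 d2) ltac:(apply Rmin_glb_lt; lra)) as [u [Iu [Hus Hud]]].
  assert (A1 := Hd1' u Iu Hus ltac:(assert (Hm := Rmin_l d1 d2); lra)).
  assert (A2 := Hd2' u Iu Hus ltac:(assert (Hm := Rmin_r d1 d2); lra)).
  rewrite (Hfg u Iu), (Hfg s Is) in A1.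
  set (Q := (g u - g s) / (u - s)) in *.
  assert (Hn : Rabs (l1 - l2) <= Rabs (Q - l1) + Rabs (Q - l2)).
  { replace (l1 - l2) with (- (Q - l1) + (Q - l2)) by ring.
    eapply Rle_trans; [apply Rabs_triang|]. rewrite Rabs_Ropp. lra. }
  unfold eta in *. lra.
Qed.

Lemma dw_opp I f t l : deriv_within I f t l -> deriv_within I (fun s => - f s) t (- l).
Proof.
  intro H. unfold deriv_within in *.
  apply filterlim_ext with (fun s => opp ((f s - f t) / (s - t))).
  { intro x. unfold opp; simpl. unfold Rdiv. ring. }
  eapply filterlim_comp; [exact H|]. apply (filterlim_opp l).
Qed.

Lemma cont_opp I f : cont_on_IxR I f -> cont_on_IxR I (fun t r => - f t r).
Proof.
  intro Hf. apply (cont_comp1 I f Ropp Hf). intros t r _.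
  apply (filterlim_opp (f t r)).
Qed.

Lemma abs_le_sqrt x y : Rabs x <= sqrt (x ^ 2 + y ^ 2).
Proof.
  rewrite <- sqrt_Rsqr_abs. apply sqrt_le_1_alt. unfold Rsqr. nra.
Qed.

Lemma sqrt_le_sum x y : sqrt (x ^ 2 + y ^ 2) <= Rabs x + Rabs y.
Proof.
  rewrite <- (sqrt_Rsqr (Rabs x + Rabs y)) by (pose proof (Rabs_pos x); pose proof (Rabs_pos y); lra).
  apply sqrt_le_1_alt. unfold Rsqr.
  assert (Hx : x ^ 2 = Rabs x * Rabs x) by (rewrite <- Rabs_mult; simpl; rewrite Rmult_1_r, Rabs_right; [ring|nra]).
  assert (Hy : y ^ 2 = Rabs y * Rabs y) by (rewrite <- Rabs_mult; simpl; rewrite Rmult_1_r, Rabs_right; [ring|nra]).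
  rewrite Hx, Hy. pose proof (Rabs_pos x); pose proof (Rabs_pos y). nra.
Qed.

Lemma pde_bound E P a b x y xt tt : 0 < E -> 0 < P -> 0 < tt ->
  E * xt = ((- a - 1 / tt) * E - b * (P * E)) * x + (- E / tt) * y ->
  Rabs xt <= (Rabs a + 2 / tt + Rabs b * P) * sqrt (x ^ 2 + y ^ 2).
Proof.
  intros HE HP Ht Heq.
  assert (Hxt : xt = (- a - 1 / tt - b * P) * x + (- 1 / tt) * y).
  { apply (Rmult_eq_reg_l E); [|lra]. rewrite Heq. field. lra. }
  rewrite Hxt.
  set (S := sqrt (x ^ 2 + y ^ 2)).
  assert (Hx : Rabs x <= S) by apply abs_le_sqrt.
  assert (Hy : Rabs y <= S) by (unfold S; rewrite Rplus_comm; apply abs_le_sqrt).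
  assert (Hi : 0 < 1 / tt) by (apply Rdiv_lt_0_compat; lra).
  eapply Rle_trans; [apply Rabs_triang|].
  rewrite !Rabs_mult.
  assert (H1 : Rabs (- a - 1 / tt - b * P) <= Rabs a + 1 / tt + Rabs b * P).
  { replace (- a - 1 / tt - b * P) with (- a + (- (1 / tt) + - (b * P))) by ring.
    eapply Rle_trans; [apply Rabs_triang|]. rewrite Rabs_Ropp.
    eapply Rle_trans; [apply Rplus_le_compat_l, Rabs_triang|].
    rewrite !Rabs_Ropp, Rabs_mult, (Rabs_right (1/tt)), (Rabs_right P) by lra. lra. }
  assert (H2 : Rabs (- 1 / tt) = 1 / tt).
  { replace (- 1 / tt) with (- (1 / tt)) by (field; lra). rewrite Rabs_Ropp, Rabs_right; lra. }
  rewrite H2.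
  pose proof (Rabs_pos x); pose proof (Rabs_pos y); pose proof (Rabs_pos a); pose proof (Rabs_pos b).
  pose proof (Rabs_pos (- a - 1 / tt - b * P)).
  assert (2 / tt = 1 / tt + 1 / tt) by (field; lra).
  nra.
Qed.

Lemma dphi_per phi dphi : (forall r, is_derive phi r (dphi r)) -> periodic1 phi -> periodic1 dphi.
Proof.
  intros Hd Hp r.
  assert (H1 : is_derive (fun x => phi (x + 1)) r (dphi (r + 1))).
  { replace (dphi (r + 1)) with (scal 1 (dphi (r + 1))) by (unfold scal; simpl; unfold mult; simpl; ring).
    apply (is_derive_comp phi (fun x => x + 1)). apply Hd.
    auto_derive; auto; ring. }
  apply is_derive_unique in H1. rewrite <- H1, <- (is_derive_unique _ _ _ (Hd r)).
  apply Derive_ext. intro x. apply (Hp x).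
Qed.

Lemma cont_exp x : continuous exp x.
Proof. apply (@ex_derive_continuous R_AbsRing R_NormedModule). auto_derive. auto. Qed.

Lemma cont_sq x : continuous (fun y => y ^ 2) x.
Proof. apply (@ex_derive_continuous R_AbsRing R_NormedModule). auto_derive. auto. Qed.

Lemma cont_sqrt x : 0 <= x -> continuous sqrt x.
Proof. intro H. apply continuity_pt_filterlim, continuity_pt_sqrt, H. Qed.

Lemma cont_div2 x : 0 < x -> continuous (fun y => 2 / y) x.
Proof. intro H. apply (@ex_derive_continuous R_AbsRing R_NormedModule). auto_derive. lra. Qed.

Lemma cont_of_deriv (f df : R -> R) x : (forall r, is_derive f r (df r)) -> continuous f x.
Proof. intro H. apply (@ex_derive_continuous R_AbsRing R_NormedModule). exists (df x). apply H. Qed.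

Theorem proposition2p3
  (I : R -> Prop)
  (lam lamt lamr mu mut : R -> R -> R)
  (psi phi dphi : R -> R)
  (X Xt Xr Y Yt Yr : R -> R -> R) :
  is_interval I -> I 1 -> (forall t, I t -> 0 < t) ->
  (* lambda, mu, mu~ in C^1(I x R), 1-periodic in r *)
  C1_with I lam lamt lamr -> C1_on I mu -> C1_on I mut ->
  periodic_r I lam -> periodic_r I mu -> periodic_r I mut ->
  (* psi in C^1(R), phi in C^2(R) with phi' = dphi, both 1-periodic *)
  (exists dpsi, (forall r, is_derive psi r (dpsi r)) /\ (forall r, continuous dpsi r)) ->
  (forall r, is_derive phi r (dphi r)) ->
  (exists d2phi, (forall r, is_derive dphi r (d2phi r)) /\ (forall r, continuous d2phi r)) ->
  periodic1 psi -> periodic1 phi ->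
  (* X, Y in C^1(I x R), 1-periodic in r *)
  C1_with I X Xt Xr -> C1_with I Y Yt Yr ->
  periodic_r I X -> periodic_r I Y ->
  (* D^+ X = a~ X + b Y,  D^- Y = b X + c~ Y *)
  (forall t r, I t ->
     exp (- mu t r) * Xt t r + exp (- lam t r) * Xr t r =
     ((- lamt t r - 1 / t) * exp (- mu t r) - mut t r * exp (- lam t r)) * X t r
     + (- exp (- mu t r) / t) * Y t r) ->
  (forall t r, I t ->
     exp (- mu t r) * Yt t r - exp (- lam t r) * Yr t r =
     (- exp (- mu t r) / t) * X t r
     + ((- lamt t r - 1 / t) * exp (- mu t r) + mut t r * exp (- lam t r)) * Y t r) ->
  (* initial data at t = 1 *)
  (forall r, X 1 r = exp (- mu 1 r) * psi r - exp (- lam 1 r) * dphi r) ->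
  (forall r, Y 1 r = exp (- mu 1 r) * psi r + exp (- lam 1 r) * dphi r) ->
  let K0 := 2 * supR (fun r => Rabs (psi r) * exp (- mu 1 r)
                               + Rabs (dphi r) * exp (- lam 1 r)) in
  let m := fun t => supR (fun r => Rabs (lamt t r) + 2 / t
                               + Rabs (mut t r) * exp (mu t r - lam t r)) in
  let K := fun t => supR (fun r => sqrt (X t r ^ 2 + Y t r ^ 2)) in
  (forall t, I t -> t <= 1 -> K t <= K0 + 3 * RInt (fun s => m s * K s) t 1) /\
  (forall t, I t -> 1 <= t -> K t <= K0 + 3 * RInt (fun s => m s * K s) 1 t).
Proof.
  intros Hint I1 Ipos [Hlam_t [Hlam_r [Hlam_c [Hlamt_c _]]]] [mu_t [mu_r [_ [_ [Hmu_c _]]]]]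
    [mt_t [mt_r [_ [_ [Hmut_c _]]]]] Plam Pmu Pmut [dpsi [Hdpsi _]] Hdphi [d2phi [Hd2phi _]]
    Ppsi Pphi [HXt [HXr [HXc _]]] [HYt [HYr [HYc _]]] PX PY PDEX PDEY X1 Y1 K0 m K.
  set (g0 := fun r => Rabs (psi r) * exp (- mu 1 r) + Rabs (dphi r) * exp (- lam 1 r)).
  set (A := supR g0).
  assert (HK0 : K0 = 2 * A) by reflexivity.
  assert (Pdphi := dphi_per phi dphi Hdphi Pphi).
  assert (Hg0c : forall r, continuous g0 r).
  { intro r. unfold g0.
    apply (continuous_plus (fun r => Rabs (psi r) * exp (- mu 1 r)) (fun r => Rabs (dphi r) * exp (- lam 1 r))).
    - apply (continuous_mult (fun r => Rabs (psi r)) (fun r => exp (- mu 1 r))).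
      + apply (continuous_comp psi Rabs). apply (cont_of_deriv psi dpsi _ Hdpsi).
        apply continuous_Rabs.
      + apply (continuous_comp (fun r => - mu 1 r) exp); [|apply cont_exp].
        apply (continuous_opp (fun r => mu 1 r)). apply (cont_r I mu 1 r Hmu_c I1).
    - apply (continuous_mult (fun r => Rabs (dphi r)) (fun r => exp (- lam 1 r))).
      + apply (continuous_comp dphi Rabs). apply (cont_of_deriv dphi d2phi _ Hd2phi).
        apply continuous_Rabs.
      + apply (continuous_comp (fun r => - lam 1 r) exp); [|apply cont_exp].
        apply (continuous_opp (fun r => lam 1 r)). apply (cont_r I lam 1 r Hlam_c I1). }
  assert (Hg0p : periodic1 g0).
  { intro r. unfold g0. rewrite Ppsi, Pdphi, (Pmu 1 r I1), (Plam 1 r I1). reflexivity. }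
  assert (Hg0A : forall r, g0 r <= A).
  { destruct (per_max g0 Hg0p Hg0c) as [rs Hrs]. intro r. unfold A. rewrite (supR_max g0 rs Hrs). apply Hrs. }
  assert (HX0 : forall r, Rabs (X 1 r) <= A).
  { intro r. apply Rle_trans with (g0 r); [|apply Hg0A]. rewrite X1. unfold g0.
    eapply Rle_trans; [apply Rabs_triang|]. rewrite Rabs_Ropp, !Rabs_mult.
    rewrite (Rabs_right (exp (- mu 1 r))), (Rabs_right (exp (- lam 1 r))) by (apply Rle_ge, Rlt_le, exp_pos). lra. }
  assert (HY0 : forall r, Rabs (Y 1 r) <= A).
  { intro r. apply Rle_trans with (g0 r); [|apply Hg0A]. rewrite Y1. unfold g0.
    eapply Rle_trans; [apply Rabs_triang|]. rewrite !Rabs_mult.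
    rewrite (Rabs_right (exp (- mu 1 r))), (Rabs_right (exp (- lam 1 r))) by (apply Rle_ge, Rlt_le, exp_pos). lra. }
  set (gK := fun t r => sqrt (X t r ^ 2 + Y t r ^ 2)).
  assert (HgKc : cont_on_IxR I gK).
  { apply (cont_comp1 I (fun t r => X t r ^ 2 + Y t r ^ 2) sqrt).
    - apply (cont_plus I (fun t r => X t r ^ 2) (fun t r => Y t r ^ 2)).
      + apply (cont_comp1 I X (fun y => y ^ 2) HXc). intros; apply cont_sq.
      + apply (cont_comp1 I Y (fun y => y ^ 2) HYc). intros; apply cont_sq.
    - intros t r _. apply cont_sqrt. nra. }
  assert (HgKp : periodic_r I gK).
  { intros t r It. unfold gK. rewrite (PX t r It), (PY t r It). reflexivity. }
  assert (HK1 : K 1 <= 2 * A).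
  { destruct (sup_at I gK 1 HgKc HgKp I1) as [rs [E _]].
    change (K 1) with (supR (gK 1)). rewrite E. unfold gK.
    eapply Rle_trans; [apply sqrt_le_sum|]. specialize (HX0 rs). specialize (HY0 rs). lra. }

  set (gm := fun t r => Rabs (lamt t r) + 2 / t + Rabs (mut t r) * exp (mu t r - lam t r)).
  assert (Hgmc : cont_on_IxR I gm).
  { apply (cont_plus I (fun t r => Rabs (lamt t r) + 2 / t) (fun t r => Rabs (mut t r) * exp (mu t r - lam t r))).
    - apply (cont_plus I (fun t r => Rabs (lamt t r)) (fun t r => 2 / t)).
      + apply (cont_comp1 I lamt Rabs Hlamt_c). intros; apply continuous_Rabs.
      + apply (cont_t I (fun t => 2 / t)). intros t It. apply cont_div2, Ipos, It.
    - apply (cont_mult I (fun t r => Rabs (mut t r)) (fun t r => exp (mu t r - lam t r))).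
      + apply (cont_comp1 I mut Rabs Hmut_c). intros; apply continuous_Rabs.
      + apply (cont_comp1 I (fun t r => mu t r - lam t r) exp); [|intros; apply cont_exp].
        apply (cont_plus I mu (fun t r => - lam t r) Hmu_c (cont_opp I lam Hlam_c)). }
  assert (Hgm0 : forall t r, I t -> 0 <= gm t r).
  { intros t r It. unfold gm. pose proof (Ipos t It).
    assert (0 < 2 / t) by (apply Rdiv_lt_0_compat; lra).
    pose proof (Rabs_pos (lamt t r)); pose proof (Rabs_pos (mut t r)).
    pose proof (exp_pos (mu t r - lam t r)). nra. }
  assert (Main : forall p q, I p -> I q -> p <> q ->
     (forall t, I t -> t <= 1 -> K t <= K0 + 3 * RInt (fun s => m s * K s) t 1) /\
     (forall t, I t -> 1 <= t -> K t <= K0 + 3 * RInt (fun s => m s * K s) 1 t)).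
  { intros p q Ip Iq Hpq.
    assert (Plamt : periodic_r I lamt).
    { intros t r It.
      exact (dw_unique I p q t (fun s => lam s (r + 1)) (fun s => lam s r) _ _ Hint Ip Iq Hpq It
        (Hlam_t t (r + 1) It) (Hlam_t t r It) (fun u Iu => Plam u r Iu)). }
    assert (Hgmp : periodic_r I gm).
    { intros t r It. unfold gm. rewrite (Plamt t r It), (Pmut t r It), (Pmu t r It), (Plam t r It).
      reflexivity. }
    assert (Hmc : hcont I m) by exact (sup_cont I gm Hgmc Hgmp).
    assert (HKc : hcont I K) by exact (sup_cont I gK HgKc HgKp).
    set (h := fun s => m s * K s).
    assert (Hhc : hcont I h) by exact (hcont_mult I m K Hmc HKc).
    assert (Hgm_le : forall t r, I t -> gm t r <= m t) by (intros; exact (sup_ge I gm t r Hgmc Hgmp H)).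
    assert (HgK_le : forall t r, I t -> gK t r <= K t) by (intros; exact (sup_ge I gK t r HgKc HgKp H)).
    assert (Hm0 : forall t, I t -> 0 <= m t).
    { intros t It. eapply Rle_trans; [apply (Hgm0 t 0 It)|apply Hgm_le, It]. }
    assert (HK0' : forall t, I t -> 0 <= K t).
    { intros t It. eapply Rle_trans; [apply (sqrt_pos (X t 0 ^ 2 + Y t 0 ^ 2))|apply (HgK_le t 0 It)]. }
    assert (Hh0 : forall t, I t -> 0 <= h t).
    { intros t It. unfold h. apply Rmult_le_pos; auto. }
    assert (Hexp : forall t r, exp (- lam t r) = exp (mu t r - lam t r) * exp (- mu t r)).
    { intros. rewrite <- exp_plus. f_equal. ring. }
    assert (HpX : forall t r, I t -> Xr t r = 0 -> Rabs (Xt t r) <= h t).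
    { intros t r It Hz.
      assert (Hb := pde_bound (exp (- mu t r)) (exp (mu t r - lam t r)) (lamt t r) (mut t r)
        (X t r) (Y t r) (Xt t r) t (exp_pos _) (exp_pos _) (Ipos t It)).
      eapply Rle_trans; [apply Hb|].
      - rewrite <- Hexp. specialize (PDEX t r It). rewrite Hz, Rmult_0_r, Rplus_0_r in PDEX. exact PDEX.
      - unfold h. apply Rmult_le_compat; [apply (Hgm0 t r It)|apply sqrt_pos|apply (Hgm_le t r It)|apply (HgK_le t r It)]. }
    assert (HpY : forall t r, I t -> Yr t r = 0 -> Rabs (Yt t r) <= h t).
    { intros t r It Hz.
      assert (Hb := pde_bound (exp (- mu t r)) (exp (mu t r - lam t r)) (lamt t r) (- mut t r)
        (Y t r) (X t r) (Yt t r) t (exp_pos _) (exp_pos _) (Ipos t It)).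
      rewrite Rabs_Ropp, (Rplus_comm (Y t r ^ 2)) in Hb.
      eapply Rle_trans; [apply Hb|].
      - specialize (PDEY t r It). rewrite Hz, Rmult_0_r, Rminus_0_r in PDEY. rewrite PDEY, Hexp. ring.
      - unfold h. apply Rmult_le_compat; [apply (Hgm0 t r It)|apply sqrt_pos|apply (Hgm_le t r It)|apply (HgK_le t r It)]. }
    assert (BX : forall t, I t -> forall r,
       (1 <= t -> Rabs (X t r) <= A + RInt h 1 t) /\ (t <= 1 -> Rabs (X t r) <= A + RInt h t 1)).
    { intros t It r.
      assert (HXp0 : forall r, X 1 r <= A) by (intro r'; specialize (HX0 r'); apply Rabs_le_between in HX0; lra).
      assert (HXn0 : forall r, - X 1 r <= A) by (intro r'; specialize (HX0 r'); apply Rabs_le_between in HX0; lra).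
      assert (Cn : cont_on_IxR I (fun t r => - X t r)) by exact (cont_opp I X HXc).
      assert (Pn : periodic_r I (fun t r => - X t r)) by (intros t' r' It'; simpl; rewrite PX; auto).
      assert (Dtn : forall t r, I t -> deriv_within I (fun s => - X s r) t (- Xt t r))
        by (intros; apply dw_opp; auto).
      assert (Drn : forall t r, I t -> is_derive (fun x => - X t x) r (- Xr t r))
        by (intros t' r' It'; exact (is_derive_opp (fun x => X t' x) r' (Xr t' r') (HXr t' r' It'))).
      assert (Hpn : forall t r, I t -> - Xr t r = 0 -> Rabs (- Xt t r) <= h t)
        by (intros t' r' It' Hz; rewrite Rabs_Ropp; apply HpX; auto; lra).
      split; intro Ht; apply Rabs_le_between; split.
      - assert (B := key_fwd I (fun t r => - X t r) (fun t r => - Xt t r) (fun t r => - Xr t r) h A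
          Hint I1 Cn Pn Dtn Drn Hpn Hhc HXn0 t It Ht r). simpl in B. lra.
      - exact (key_fwd I X Xt Xr h A Hint I1 HXc PX HXt HXr HpX Hhc HXp0 t It Ht r).
      - assert (B := key_bwd I (fun t r => - X t r) (fun t r => - Xt t r) (fun t r => - Xr t r) h A
          Hint I1 Cn Pn Dtn Drn Hpn Hhc HXn0 t It Ht r). simpl in B. lra.
      - exact (key_bwd I X Xt Xr h A Hint I1 HXc PX HXt HXr HpX Hhc HXp0 t It Ht r). }
    assert (BY : forall t, I t -> forall r,
       (1 <= t -> Rabs (Y t r) <= A + RInt h 1 t) /\ (t <= 1 -> Rabs (Y t r) <= A + RInt h t 1)).
    { intros t It r.
      assert (HXp0 : forall r, Y 1 r <= A) by (intro r'; specialize (HY0 r'); apply Rabs_le_between in HY0; lra).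
      assert (HXn0 : forall r, - Y 1 r <= A) by (intro r'; specialize (HY0 r'); apply Rabs_le_between in HY0; lra).
      assert (Cn : cont_on_IxR I (fun t r => - Y t r)) by exact (cont_opp I Y HYc).
      assert (Pn : periodic_r I (fun t r => - Y t r)) by (intros t' r' It'; simpl; rewrite PY; auto).
      assert (Dtn : forall t r, I t -> deriv_within I (fun s => - Y s r) t (- Yt t r))
        by (intros; apply dw_opp; auto).
      assert (Drn : forall t r, I t -> is_derive (fun x => - Y t x) r (- Yr t r))
        by (intros t' r' It'; exact (is_derive_opp (fun x => Y t' x) r' (Yr t' r') (HYr t' r' It'))).
      assert (Hpn : forall t r, I t -> - Yr t r = 0 -> Rabs (- Yt t r) <= h t)
        by (intros t' r' It' Hz; rewrite Rabs_Ropp; apply HpY; auto; lra).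
      split; intro Ht; apply Rabs_le_between; split.
      - assert (B := key_fwd I (fun t r => - Y t r) (fun t r => - Yt t r) (fun t r => - Yr t r) h A
          Hint I1 Cn Pn Dtn Drn Hpn Hhc HXn0 t It Ht r). simpl in B. lra.
      - exact (key_fwd I Y Yt Yr h A Hint I1 HYc PY HYt HYr HpY Hhc HXp0 t It Ht r).
      - assert (B := key_bwd I (fun t r => - Y t r) (fun t r => - Yt t r) (fun t r => - Yr t r) h A
          Hint I1 Cn Pn Dtn Drn Hpn Hhc HXn0 t It Ht r). simpl in B. lra.
      - exact (key_bwd I Y Yt Yr h A Hint I1 HYc PY HYt HYr HpY Hhc HXp0 t It Ht r). }
    split.
    - intros t It Ht.
      assert (Isub : forall s, t <= s <= 1 -> I s) by (intros s Hs; apply (Hint t s 1); tauto || lra).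
      assert (Hpos : 0 <= RInt h t 1).
      { apply RInt_ge_0; [exact Ht|apply (exrint I); auto|].
        intros x Hx. apply Hh0, Isub; lra. }
      destruct (sup_at I gK t HgKc HgKp It) as [rs [E _]].
      change (K t) with (supR (gK t)). rewrite E. unfold gK.
      eapply Rle_trans; [apply sqrt_le_sum|].
      destruct (BX t It rs) as [_ B1]. destruct (BY t It rs) as [_ B2].
      specialize (B1 Ht). specialize (B2 Ht). rewrite HK0. fold h. lra.
    - intros t It Ht.
      assert (Isub : forall s, 1 <= s <= t -> I s) by (intros s Hs; apply (Hint 1 s t); tauto || lra).
      assert (Hpos : 0 <= RInt h 1 t).
      { apply RInt_ge_0; [exact Ht|apply (exrint I); auto|].
        intros x Hx. apply Hh0, Isub; lra. }
      destruct (sup_at I gK t HgKc HgKp It) as [rs [E _]].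
      change (K t) with (supR (gK t)). rewrite E. unfold gK.
      eapply Rle_trans; [apply sqrt_le_sum|].
      destruct (BX t It rs) as [B1 _]. destruct (BY t It rs) as [B2 _].
      specialize (B1 Ht). specialize (B2 Ht). rewrite HK0. fold h. lra. }
  split.
  - intros t It Ht. destruct (Req_dec t 1) as [->|Hne].
    + rewrite RInt_point. unfold zero; simpl. rewrite HK0. lra.
    + exact (proj1 (Main 1 t I1 It (not_eq_sym Hne)) t It Ht).
  - intros t It Ht. destruct (Req_dec t 1) as [->|Hne].
    + rewrite RInt_point. unfold zero; simpl. rewrite HK0. lra.
    + exact (proj2 (Main 1 t I1 It (not_eq_sym Hne)) t It Ht).
Qed.
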